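(* Let $c\in\mathbb R$ and let $\mu\ge0$ be a $C^2$ solution of $-c\partial_\xi\mu=\theta\partial_{\xi\xi}\mu+\alpha\partial_{\theta\theta}\mu+r\mu(1-\nu)$ on $\mathbb R\times\Theta$ with $\partial_\theta\mu(\xi,\theta_{\min})=\partial_\theta\mu(\xi,\theta_{\max})=0$, such that $\nu$ is locally bounded. Then for every $0<b<\infty$ there exists $C(b)<\infty$ such that $$\mu(\xi,\theta)\le C(b)\,\mu(\xi,\theta')\quad\text{for all }(\xi,\theta,\theta')\in(-b,b)\times\Theta\times\Theta.$$
   Context: $\Theta=(\theta_{\min},\theta_{\max})$, $0<\theta_{\min}<\theta_{\max}<\infty$, $\alpha,r>0$; $\nu(\xi)=\int_\Theta\mu(\xi,\theta)d\theta$. *)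

(* Defs.v *)
From Stdlib Require Import Reals Lra.
Open Scope R_scope.

Definition in_closed (tmin tmax t : R) : Prop := tmin <= t <= tmax.

Definition cont_strip (tmin tmax : R) (f : R -> R -> R) : Prop :=
  forall x y, in_closed tmin tmax y ->
    forall eps, 0 < eps -> exists delta, 0 < delta /\
      forall x' y', in_closed tmin tmax y' ->
        Rabs (x' - x) < delta -> Rabs (y' - y) < delta ->
        Rabs (f x' y' - f x y) < eps.

Definition pderiv_xi (tmin tmax : R) (f g : R -> R -> R) : Prop :=
  forall x y, in_closed tmin tmax y ->
    derivable_pt_lim (fun s => f s y) x (g x y).

(* g is the partial derivative of f in the second variable (theta) on the
   closed strip; at the endpoints this is the one-sided derivative. *)
Definition pderiv_theta (tmin tmax : R) (f g : R -> R -> R) : Prop :=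
  forall x y, in_closed tmin tmax y ->
    forall eps, 0 < eps -> exists delta, 0 < delta /\
      forall h, h <> 0 -> Rabs h < delta -> in_closed tmin tmax (y + h) ->
        Rabs ((f x (y + h) - f x y) / h - g x y) < eps.

Definition C2_strip (tmin tmax : R) (f f1 f2 f11 f22 : R -> R -> R) : Prop :=
  exists f12 f21 : R -> R -> R,
    pderiv_xi tmin tmax f f1 /\ pderiv_theta tmin tmax f f2 /\
    pderiv_xi tmin tmax f1 f11 /\ pderiv_theta tmin tmax f1 f12 /\
    pderiv_xi tmin tmax f2 f21 /\ pderiv_theta tmin tmax f2 f22 /\
    cont_strip tmin tmax f /\ cont_strip tmin tmax f1 /\
    cont_strip tmin tmax f2 /\ cont_strip tmin tmax f11 /\
    cont_strip tmin tmax f12 /\ cont_strip tmin tmax f21 /\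
    cont_strip tmin tmax f22.

(* Main.v *)
Require Import Defs.
From Stdlib Require Import Reals Lra Classical.
Open Scope R_scope.
From mathcomp Require Import all_boot all_order all_algebra.
From mathcomp Require Import boolp classical_sets interval_inference reals topology normedtype derive.
From mathcomp Require Import Rstruct Rstruct_topology.
Import Order.TTheory GRing.Theory Num.Theory.
Import numFieldNormedType.Exports.

Local Open Scope R_scope.
Lemma evt2 (f : R -> R -> R) (a b c d : R) : a <= b -> c <= d ->
 (forall x y, a<=x<=b -> c<=y<=d -> forall eps, 0<eps -> exists delta, 0<delta /\
   forall x' y', a<=x'<=b -> c<=y'<=d -> Rabs(x'-x)<delta -> Rabs(y'-y)<delta ->
   Rabs(f x' y' - f x y) < eps) ->
 exists x0 y0, a<=x0<=b /\ c<=y0<=d /\ forall x y, a<=x<=b -> c<=y<=d -> f x0 y0 <= f x y.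
Proof.
move=> ab cd fc.
Local Open Scope classical_set_scope.
Local Open Scope ring_scope.
set A := `[a, b] `*` `[c, d].
have A0 : A !=set0.
  exists (a, c); split; rewrite /= in_itv /=; apply/andP; split; apply/RleP; lra.
have cA : compact A by apply: compact_setX; apply: segment_compact.
have [p pA pmin] : exists2 p, p \in A & forall t, t \in A -> (fun q : R * R => f q.1 q.2) p <= (fun q : R*R => f q.1 q.2) t.
  apply: compact_EVT_min => //.
  apply/subspace_continuousP => -[x y] [/= xab ycd].
  rewrite /from_subspace /=.
  apply/(cvgrPdist_lt (V:=R^o)) => e /RltP e0.
  have hx : Rle a x /\ Rle x b by move: xab; rewrite in_itv /= => /andP[/RleP h1 /RleP h2].
  have hy : Rle c y /\ Rle y d by move: ycd; rewrite in_itv /= => /andP[/RleP h1 /RleP h2].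
  have [dl [dl0 Hd]] := fc x y hx hy e e0.
  rewrite near_withinE; apply/nbhs_ballP; exists dl; first by apply/RltP.
  move=> [x' y'] [/= bx by'] [/= xA yA].
  have hx' : Rle a x' /\ Rle x' b by move: xA; rewrite in_itv /= => /andP[/RleP h1 /RleP h2].
  have hy' : Rle c y' /\ Rle y' d by move: yA; rewrite in_itv /= => /andP[/RleP h1 /RleP h2].
  move: bx by'; rewrite /ball /= => /RltP bx /RltP by'.
  apply/RltP; rewrite /Num.norm /=.
  change (Rlt (Rabs (Rminus x x')) dl) in bx.
  change (Rlt (Rabs (Rminus y y')) dl) in by'.
  change (Rlt (Rabs (Rminus (f x y) (f x' y'))) e).
  rewrite Rabs_minus_sym; apply: Hd => //; rewrite Rabs_minus_sym //.
case: p pA pmin => x0 y0 pA pmin.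
have inA : forall u v : R, Rle a u /\ Rle u b -> Rle c v /\ Rle v d -> (u, v) \in A.
  move=> u v [h1 h2] [h3 h4]; rewrite inE; split; rewrite /= in_itv /=; apply/andP; split; apply/RleP => //.
move: pA; rewrite inE => -[/= h1 h2].
exists x0, y0; split; [|split].
- by move: h1; rewrite in_itv /= => /andP[/RleP ? /RleP ?].
- by move: h2; rewrite in_itv /= => /andP[/RleP ? /RleP ?].
- move=> u v hu hv; apply/RleP; exact: (pmin (u, v) (inA u v hu hv)).
Qed.

From Coquelicot Require Import Coquelicot.
From mathcomp Require Import ssreflect.
Open Scope R_scope.

Definition Ef (lam a b x y : R) := exp (-lam * ((x-a)*(x-a) + (y-b)*(y-b))).

Lemma dE1 lam a b x y : derivable_pt_lim (fun s => Ef lam a b s y) x (-2*lam*(x-a)*Ef lam a b x y).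
Proof. apply is_derive_Reals. unfold Ef. auto_derive; first done. unfold Rminus; ring. Qed.
Lemma dE11 lam a b x y : derivable_pt_lim (fun s => -2*lam*(s-a)*Ef lam a b s y) x ((4*lam*lam*(x-a)*(x-a) - 2*lam)*Ef lam a b x y).
Proof. apply is_derive_Reals. unfold Ef. auto_derive; first done. unfold Rminus; ring. Qed.
Lemma dE2 lam a b x y : derivable_pt_lim (fun s => Ef lam a b x s) y (-2*lam*(y-b)*Ef lam a b x y).
Proof. apply is_derive_Reals. unfold Ef. auto_derive; first done. unfold Rminus; ring. Qed.
Lemma dE22 lam a b x y : derivable_pt_lim (fun s => -2*lam*(s-b)*Ef lam a b x s) y ((4*lam*lam*(y-b)*(y-b) - 2*lam)*Ef lam a b x y).
Proof. apply is_derive_Reals. unfold Ef. auto_derive; first done. unfold Rminus; ring. Qed.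

Lemma Ef_pos lam a b x y : 0 < Ef lam a b x y.
Proof. apply exp_pos. Qed.

Lemma Ef_le1 lam a b x y : 0 <= lam -> Ef lam a b x y <= 1.
Proof.
move=> hl; unfold Ef; rewrite -exp_0.
have h : 0 <= (x-a)*(x-a) + (y-b)*(y-b) by apply Rplus_le_le_0_compat; apply Rle_0_sqr.
have harg : -lam * ((x-a)*(x-a) + (y-b)*(y-b)) <= 0.
  rewrite Ropp_mult_distr_l_reverse; apply Ropp_le_cancel; rewrite Ropp_0 Ropp_involutive; apply Rmult_le_pos => //.
destruct (Rle_lt_or_eq_dec _ _ harg) as [hl'|hl'].
- apply Rlt_le, exp_increasing; lra.
- rewrite hl'; right; reflexivity.
Qed.

Lemma dlin f g x lf lg eps K : derivable_pt_lim f x lf -> derivable_pt_lim g x lg ->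
  derivable_pt_lim (fun s => f s - eps*(g s - K)) x (lf - eps*lg).
Proof.
move=> hf hg; apply is_derive_Reals.
apply is_derive_Reals in hf; apply is_derive_Reals in hg.
apply: (is_derive_minus f (fun s => eps*(g s - K))) => //.
have -> : eps * lg = scal eps (minus lg 0).
  rewrite /scal /= /mult /= /minus /plus /opp /=; ring.
apply: is_derive_scal.
apply: is_derive_minus => //. apply: is_derive_const.
Qed.

Lemma second_min f f1 f2 x0 d : 0 < d ->
  (forall x, Rabs (x - x0) < d -> derivable_pt_lim f x (f1 x)) ->
  derivable_pt_lim f1 x0 f2 ->
  (forall x, Rabs (x - x0) < d -> f x0 <= f x) -> f1 x0 = 0 /\ 0 <= f2.
Proof.
move=> hd hD hD2 hmin.
have h0 : f1 x0 = 0.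
  have hx : derivable_pt_lim f x0 (f1 x0) by apply hD; rewrite Rminus_diag Rabs_R0.
  have := deriv_minimum f (x0 - d) (x0 + d) x0 (exist _ (f1 x0) hx) ltac:(lra) ltac:(lra).
  simpl; apply => x h1 h2; apply hmin; apply Rabs_def1; lra.
split => //.
destruct (Rle_or_lt 0 f2) as [|hneg] => //.
exfalso.
have [dl hdl] := hD2 (- f2 / 2) ltac:(lra).
set h := Rmin dl d / 2.
have hpos : 0 < h by unfold h; have := cond_pos dl; move: (Rmin_glb_lt dl d 0); unfold Rmin; destruct Rle_dec; lra.
have hh1 : h < dl by unfold h; have := Rmin_l dl d; have := cond_pos dl; unfold Rmin; destruct Rle_dec; lra.
have hh2 : h < d by unfold h; have := Rmin_r dl d; unfold Rmin; destruct Rle_dec; lra.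
have [cc [hc1 hc2]] := MVT_cor2 f f1 x0 (x0 + h) ltac:(lra)
  ltac:(move=> cc hc; apply hD; apply Rabs_def1; lra).
have hneg1 : f1 cc < 0.
  have := hdl (cc - x0) ltac:(lra) ltac:(rewrite Rabs_right; lra).
  replace (x0 + (cc - x0)) with cc by ring. rewrite h0 Rminus_0_r => hq.
  have hq' := Rabs_def2 _ _ hq.
  have hcx : 0 < cc - x0 by lra.
  have : f1 cc / (cc - x0) < 0 by lra.
  move=> hlt. apply Rnot_le_lt => hge.
  have : 0 <= f1 cc / (cc - x0) by apply Rle_mult_inv_pos.
  lra.
have := hmin (x0 + h) ltac:(rewrite Rabs_right; replace (x0 + h - x0) with h by ring; lra).
have : f1 cc * (x0 + h - x0) < 0 by replace (x0 + h - x0) with h by ring; nra.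
lra.
Qed.

Lemma endpoint_left (F : R -> R) y F' eta : 0 < eta ->
  (forall eps, 0 < eps -> exists dl, 0 < dl /\ forall h, 0 < h -> h < dl ->
      Rabs ((F (y+h) - F y)/h - F') < eps) ->
  (forall h, 0 < h -> h < eta -> F y <= F (y+h)) -> 0 <= F'.
Proof.
move=> he hD hmin.
destruct (Rle_or_lt 0 F') as [|hneg] => //; exfalso.
have [dl [hdl hq]] := hD (- F' / 2) ltac:(lra).
set h := Rmin dl eta / 2.
have hpos : 0 < h by unfold h; unfold Rmin; destruct Rle_dec; lra.
have hh1 : h < dl by unfold h; unfold Rmin; destruct Rle_dec; lra.
have hh2 : h < eta by unfold h; unfold Rmin; destruct Rle_dec; lra.
have := Rabs_def2 _ _ (hq h hpos hh1).
have : 0 <= (F (y+h) - F y) / h by apply Rle_mult_inv_pos; [have := hmin h hpos hh2; lra | lra].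
lra.
Qed.

Lemma endpoint_right (F : R -> R) y F' eta : 0 < eta ->
  (forall eps, 0 < eps -> exists dl, 0 < dl /\ forall h, h < 0 -> - dl < h ->
      Rabs ((F (y+h) - F y)/h - F') < eps) ->
  (forall h, h < 0 -> - eta < h -> F y <= F (y+h)) -> F' <= 0.
Proof.
move=> he hD hmin.
destruct (Rle_or_lt F' 0) as [|hneg] => //; exfalso.
have [dl [hdl hq]] := hD (F' / 2) ltac:(lra).
set h := - (Rmin dl eta / 2).
have hpos : h < 0 by unfold h; unfold Rmin; destruct Rle_dec; lra.
have hh1 : - dl < h by unfold h; unfold Rmin; destruct Rle_dec; lra.
have hh2 : - eta < h by unfold h; unfold Rmin; destruct Rle_dec; lra.
have := Rabs_def2 _ _ (hq h hpos hh1).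
have : (F (y+h) - F y) / h <= 0.
  have hn := hmin h hpos hh2.
  replace ((F (y+h) - F y) / h) with (- ((F (y+h) - F y) / (-h))) by (field; lra).
  have : 0 <= (F (y+h) - F y) / (-h) by apply Rle_mult_inv_pos; lra.
  lra.
lra.
Qed.

Lemma cont1_of_deriv g x l : derivable_pt_lim g x l ->
  forall eps, 0 < eps -> exists dl, 0 < dl /\ forall y, Rabs (y - x) < dl -> Rabs (g y - g x) < eps.
Proof.
move=> hd eps he.
have hc := derivable_continuous_pt g x (exist _ l hd).
have [alp [ha H]] := hc eps he.
exists alp; split => // y hy.
destruct (Req_dec y x) as [->|hne].
- by rewrite Rminus_diag Rabs_R0.
- apply (H y); split; [split; [done| by auto] | done].
Qed.

Lemma gexp_le1 lam a s : 0 <= lam -> 0 < exp (-lam*((s-a)*(s-a))) <= 1.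
Proof.
move=> hl; split; first by apply exp_pos.
rewrite -exp_0.
have harg : -lam * ((s-a)*(s-a)) <= 0.
  rewrite Ropp_mult_distr_l_reverse; apply Ropp_le_cancel; rewrite Ropp_0 Ropp_involutive; apply Rmult_le_pos => //; apply Rle_0_sqr.
destruct (Rle_lt_or_eq_dec _ _ harg) as [hl'|hl'].
- apply Rlt_le, exp_increasing; lra.
- rewrite hl'; right; reflexivity.
Qed.

Lemma Ef_cont lam a b x y : 0 <= lam -> forall eps, 0 < eps -> exists dl, 0 < dl /\
  forall x' y', Rabs (x' - x) < dl -> Rabs (y' - y) < dl ->
    Rabs (Ef lam a b x' y' - Ef lam a b x y) < eps.
Proof.
move=> hl eps he.
set g1 := fun s => exp (-lam*((s-a)*(s-a))).
set g2 := fun s => exp (-lam*((s-b)*(s-b))).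
have hsplit : forall u v, Ef lam a b u v = g1 u * g2 v.
  by move=> u v; rewrite /Ef /g1 /g2 -exp_plus; f_equal; ring.
have d1 : derivable_pt_lim g1 x (-2*lam*(x-a)*g1 x).
  apply is_derive_Reals; rewrite /g1; auto_derive; first done; unfold Rminus; ring.
have d2 : derivable_pt_lim g2 y (-2*lam*(y-b)*g2 y).
  apply is_derive_Reals; rewrite /g2; auto_derive; first done; unfold Rminus; ring.
have [e1 [he1 H1]] := cont1_of_deriv _ _ _ d1 (eps/2) ltac:(lra).
have [e2 [he2 H2]] := cont1_of_deriv _ _ _ d2 (eps/2) ltac:(lra).
exists (Rmin e1 e2); split; first by unfold Rmin; destruct Rle_dec; lra.
move=> x' y' hx hy.
have hx' : Rabs (x' - x) < e1 by move: hx; unfold Rmin; destruct Rle_dec; lra.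
have hy' : Rabs (y' - y) < e2 by move: hy; unfold Rmin; destruct Rle_dec; lra.
rewrite !hsplit.
have A1 := H1 _ hx'. have A2 := H2 _ hy'.
have [g1p g1l] := gexp_le1 lam a x hl.
have [g2p g2l] := gexp_le1 lam b y' hl.
replace (g1 x' * g2 y' - g1 x * g2 y) with ((g1 x' - g1 x) * g2 y' + g1 x * (g2 y' - g2 y)) by ring.
eapply Rle_lt_trans; first by apply Rabs_triang.
rewrite !Rabs_mult (Rabs_right (g2 y')) ?(Rabs_right (g1 x)); try (rewrite /g1 /g2; lra).
have : Rabs (g1 x' - g1 x) * g2 y' <= Rabs (g1 x' - g1 x) by
  rewrite /g2; have := Rabs_pos (g1 x' - g1 x); nra.
have : g1 x * Rabs (g2 y' - g2 y) <= Rabs (g2 y' - g2 y) by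
  rewrite /g1; have := Rabs_pos (g2 y' - g2 y); nra.
lra.
Qed.

Lemma ptheta_int tmin tmax f g x y : pderiv_theta tmin tmax f g -> tmin < y < tmax ->
  derivable_pt_lim (fun t => f x t) y (g x y).
Proof.
move=> hd hy eps he.
have [dl [hdl H]] := hd x y ltac:(unfold in_closed; lra) eps he.
have hp : 0 < Rmin dl (Rmin (y - tmin) (tmax - y)) by repeat (unfold Rmin; destruct Rle_dec); lra.
exists (mkposreal _ hp) => h hne hh; simpl in hh.
apply H => //.
- move: hh; repeat (unfold Rmin; destruct Rle_dec); lra.
- have := Rabs_def2 _ _ hh; unfold in_closed; repeat (unfold Rmin; destruct Rle_dec); lra.
Qed.

Lemma dlin0 f g x lf lg eps : derivable_pt_lim f x lf -> derivable_pt_lim g x lg ->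
  derivable_pt_lim (fun s => f s - eps * g s) x (lf - eps*lg).
Proof.
move=> hf hg; apply is_derive_Reals.
apply is_derive_Reals in hf; apply is_derive_Reals in hg.
apply: (is_derive_minus f (fun s => eps*g s)) => //.
have -> : eps * lg = scal eps lg by rewrite /scal /= /mult /=.
by apply: is_derive_scal.
Qed.

Lemma quot_comb (F G : R -> R) y F' G' eps K (P : R -> Prop) :
 (forall e, 0 < e -> exists dl, 0 < dl /\ forall h, h <> 0 -> Rabs h < dl -> P h ->
    Rabs ((F (y+h) - F y)/h - F') < e) ->
 derivable_pt_lim G y G' -> 0 < eps ->
 forall e, 0 < e -> exists dl, 0 < dl /\ forall h, h <> 0 -> Rabs h < dl -> P h ->
   Rabs (((F (y+h) - eps*(G (y+h) - K)) - (F y - eps*(G y - K)))/h - (F' - eps*G')) < e.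
Proof.
move=> hF hG heps e he.
have [d1 [hd1 H1]] := hF (e/2) ltac:(lra).
have he2 : 0 < e / (2*eps) by apply Rdiv_lt_0_compat; lra.
have [d2 H2] := hG _ he2.
exists (Rmin d1 d2); split; first by have := cond_pos d2; unfold Rmin; destruct Rle_dec; lra.
move=> h hne hh hP.
have A1 := H1 h hne ltac:(move: hh; unfold Rmin; destruct Rle_dec; lra) hP.
have A2 := H2 h hne ltac:(move: hh; unfold Rmin; destruct Rle_dec; lra).
replace (((F (y+h) - eps*(G (y+h) - K)) - (F y - eps*(G y - K)))/h - (F' - eps*G'))
  with (((F (y+h) - F y)/h - F') - eps * ((G (y+h) - G y)/h - G')) by (field; done).
eapply Rle_lt_trans; first by apply Rabs_triang.
rewrite Rabs_Ropp Rabs_mult (Rabs_right eps); last lra.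
have : eps * Rabs ((G (y + h) - G y) / h - G') <= eps * (e / (2*eps)).
  apply Rmult_le_compat_l; lra.
replace (eps * (e / (2*eps))) with (e/2) by (field; lra).
lra.
Qed.

Lemma propagate tmin tmax alpha r c mu mu1 mu2 mu11 mu22 nu
 (Htmin : 0 < tmin) (Htt : tmin < tmax) (Halpha : 0 < alpha)
 (HC2 : C2_strip tmin tmax mu mu1 mu2 mu11 mu22)
 (Hnn : forall x y, tmin <= y <= tmax -> 0 <= mu x y)
 (Hpde : forall xi th, tmin < th < tmax -> - c * mu1 xi th
       = th * mu11 xi th + alpha * mu22 xi th + r * mu xi th * (1 - nu xi))
 (Hbc : forall xi, mu2 xi tmin = 0 /\ mu2 xi tmax = 0)
 a b rho R Q m (Hb : tmin < b < tmax) (Hrho : 0 < rho) (HR : rho < R) (HQ : 0 < Q) (Hm : 0 < m)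
 (Hin : forall x y, tmin <= y <= tmax -> (x-a)*(x-a)+(y-b)*(y-b) <= rho*rho -> m <= mu x y)
 (HQb : forall x, Rabs (x - a) <= R -> - (r * (1 - nu x)) <= Q) :
 forall x y, tmin <= y <= tmax -> (x-a)*(x-a)+(y-b)*(y-b) < R*R -> 0 < mu x y.
Proof.
destruct HC2 as (f12 & f21 & D1 & D2 & D11 & D12 & D21 & D22 & C0 & _).
set kap := Rmin tmin alpha.
have [hk0 [hk1 hk2]] : 0 < kap /\ kap <= tmin /\ kap <= alpha by unfold kap, Rmin; destruct Rle_dec; lra.
set K1 := tmax + alpha + Rabs c * R.
have hK1 : 0 < K1 by unfold K1; have := Rmult_le_pos (Rabs c) R (Rabs_pos c) ltac:(lra); lra.
have hkr : 0 < kap * (rho * rho) by apply Rmult_lt_0_compat; [lra|nra].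
set lam := (K1 + Q + 1) / (kap*(rho*rho)) + 1.
have hlam1 : 1 <= lam.
  unfold lam; have : 0 <= (K1 + Q + 1) / (kap*(rho*rho)) by apply Rle_mult_inv_pos; lra.
  lra.
have hlam2 : K1 + Q + 1 <= lam * (kap*(rho*rho)).
  unfold lam; rewrite Rmult_plus_distr_r.
  replace ((K1 + Q + 1) / (kap * (rho * rho)) * (kap * (rho * rho))) with (K1 + Q + 1) by (field; lra).
  lra.
have hP : 0 < 4*lam*lam*kap*(rho*rho) - 2*lam*K1 - Q.
  have : 4*lam*lam*kap*(rho*rho) = 4*lam*(lam*(kap*(rho*rho))) by ring.
  have : 4*lam*(K1+Q+1) <= 4*lam*(lam*(kap*(rho*rho))) by apply Rmult_le_compat_l; lra.
  nra.
set eps := m / 2.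
have heps : 0 < eps by unfold eps; lra.
set K := exp (- lam * (R * R)).
have hK : 0 < K by apply exp_pos.
set w := fun x y => mu x y - eps * (Ef lam a b x y - K).
have Cw : forall x y, a - R <= x <= a + R -> tmin <= y <= tmax -> forall e, 0 < e ->
   exists dl, 0 < dl /\ forall x' y', a - R <= x' <= a + R -> tmin <= y' <= tmax ->
   Rabs (x' - x) < dl -> Rabs (y' - y) < dl -> Rabs (w x' y' - w x y) < e.
  move=> x y hx hy e he.
  have [d1 [hd1 H1]] := C0 x y hy (e/2) ltac:(lra).
  have he2 : 0 < e / (2*eps) by apply Rdiv_lt_0_compat; lra.
  have [d2 [hd2 H2]] := Ef_cont lam a b x y ltac:(lra) _ he2.
  exists (Rmin d1 d2); split; first by unfold Rmin; destruct Rle_dec; lra.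
  move=> x' y' hx' hy' h1 h2.
  have A1 := H1 x' y' hy' ltac:(move: h1; unfold Rmin; destruct Rle_dec; lra) ltac:(move: h2; unfold Rmin; destruct Rle_dec; lra).
  have A2 := H2 x' y' ltac:(move: h1; unfold Rmin; destruct Rle_dec; lra) ltac:(move: h2; unfold Rmin; destruct Rle_dec; lra).
  unfold w.
  replace (mu x' y' - eps * (Ef lam a b x' y' - K) - (mu x y - eps * (Ef lam a b x y - K)))
    with ((mu x' y' - mu x y) - eps * (Ef lam a b x' y' - Ef lam a b x y)) by ring.
  eapply Rle_lt_trans; first by apply Rabs_triang.
  rewrite Rabs_Ropp Rabs_mult (Rabs_right eps); last lra.
  have : eps * Rabs (Ef lam a b x' y' - Ef lam a b x y) <= eps * (e / (2*eps)).
    apply Rmult_le_compat_l; lra.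
  replace (eps * (e / (2*eps))) with (e/2) by (field; lra).
  lra.
have [x0 [y0 [hx0 [hy0 hmin]]]] := evt2 w (a-R) (a+R) tmin tmax ltac:(lra) ltac:(lra) Cw.
have hrect : forall x y, Rabs (x - a) <= R -> tmin <= y <= tmax -> w x0 y0 <= w x y.
  move=> x y hx hy; apply hmin => //.
  have := Rle_abs (x-a); have := Rle_abs (-(x-a)); rewrite Rabs_Ropp; lra.
have key : 0 <= w x0 y0.
  apply Rnot_lt_le => hneg.
  have hmu0 := Hnn x0 y0 hy0.
  have hE0 := Ef_pos lam a b x0 y0.
  have hE1 := Ef_le1 lam a b x0 y0 ltac:(lra).
  destruct (Rle_or_lt (R*R) ((x0-a)*(x0-a)+(y0-b)*(y0-b))) as [hfar|hnear].
  { have hEK : Ef lam a b x0 y0 <= K.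
      unfold K, Ef.
      have harg : - lam * ((x0 - a) * (x0 - a) + (y0 - b) * (y0 - b)) <= - lam * (R * R) by nra.
      destruct (Rle_lt_or_eq_dec _ _ harg) as [hl|hl].
      - by apply Rlt_le, exp_increasing.
      - by rewrite hl; right.
    unfold w in hneg.
    have : eps * (Ef lam a b x0 y0 - K) <= 0 by nra.
    lra. }
  destruct (Rle_or_lt ((x0-a)*(x0-a)+(y0-b)*(y0-b)) (rho*rho)) as [hin|hout].
  { have := Hin x0 y0 hy0 hin.
    unfold w in hneg.
    have : eps * (Ef lam a b x0 y0 - K) <= eps by nra.
    unfold eps in *; lra. }
  have hxa : Rabs (x0 - a) < R.
    have hsq : Rsqr (x0 - a) < Rsqr R by unfold Rsqr; have := Rle_0_sqr (y0 - b); unfold Rsqr; lra.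
    have := Rsqr_lt_abs_0 _ _ hsq; rewrite (Rabs_right R); lra.
  destruct (Rle_lt_or_eq_dec tmin y0 (proj1 hy0)) as [hy0l|hy0l]; last first.
  {
    subst y0.
    have hq := quot_comb (fun t => mu x0 t) (fun t => Ef lam a b x0 t) tmin (mu2 x0 tmin)
      (-2*lam*(tmin-b)*Ef lam a b x0 tmin) eps K (fun h => in_closed tmin tmax (tmin + h))
      (D2 x0 tmin ltac:(unfold in_closed; lra)) (dE2 lam a b x0 tmin) heps.
    have hF : 0 <= (mu2 x0 tmin - eps * (-2*lam*(tmin-b)*Ef lam a b x0 tmin)).
    { apply (endpoint_left (fun t => w x0 t) tmin _ (tmax - tmin)); first lra.
    - move=> e he; have [dl [hdl H]] := hq e he.
      exists (Rmin dl (tmax - tmin)); split; first by unfold Rmin; destruct Rle_dec; lra.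
      move=> h h1 h2; unfold w; apply H.
      + lra.
      + rewrite Rabs_right; [move: h2; unfold Rmin; destruct Rle_dec; lra | lra].
      + unfold in_closed; move: h2; unfold Rmin; destruct Rle_dec; lra.
    - move=> h h1 h2; apply hrect; [lra | lra]. }
    rewrite (proj1 (Hbc x0)) in hF.
      have : 0 < eps * (2*lam*(b - tmin)*Ef lam a b x0 tmin).
        apply Rmult_lt_0_compat => //; apply Rmult_lt_0_compat => //; nra.
      lra. }
  destruct (Rle_lt_or_eq_dec y0 tmax (proj2 hy0)) as [hy0r|hy0r]; last first.
  {
    subst y0.
    have hq := quot_comb (fun t => mu x0 t) (fun t => Ef lam a b x0 t) tmax (mu2 x0 tmax)
      (-2*lam*(tmax-b)*Ef lam a b x0 tmax) eps K (fun h => in_closed tmin tmax (tmax + h))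
      (D2 x0 tmax ltac:(unfold in_closed; lra)) (dE2 lam a b x0 tmax) heps.
    have hF : (mu2 x0 tmax - eps * (-2*lam*(tmax-b)*Ef lam a b x0 tmax)) <= 0.
    { apply (endpoint_right (fun t => w x0 t) tmax _ (tmax - tmin)); first lra.
    - move=> e he; have [dl [hdl H]] := hq e he.
      exists (Rmin dl (tmax - tmin)); split; first by unfold Rmin; destruct Rle_dec; lra.
      move=> h h1 h2; unfold w; apply H.
      + lra.
      + rewrite Rabs_left; [move: h2; unfold Rmin; destruct Rle_dec; lra | lra].
      + unfold in_closed; move: h2; unfold Rmin; destruct Rle_dec; lra.
    - move=> h h1 h2; apply hrect; [lra | lra]. }
    rewrite (proj2 (Hbc x0)) in hF.
      have : 0 < eps * (2*lam*(tmax - b)*Ef lam a b x0 tmax).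
        apply Rmult_lt_0_compat => //; apply Rmult_lt_0_compat => //; nra.
      lra. }
  have hyin : in_closed tmin tmax y0 by unfold in_closed; lra.
  have [hX1 hX2] := second_min (fun s => w s y0)
     (fun s => mu1 s y0 - eps * (-2*lam*(s-a)*Ef lam a b s y0))
     (mu11 x0 y0 - eps * ((4*lam*lam*(x0-a)*(x0-a) - 2*lam)*Ef lam a b x0 y0))
     x0 (R - Rabs (x0 - a)) ltac:(lra)
     ltac:(move=> s _; unfold w; apply dlin; [apply (D1 _ _ hyin) | apply dE1])
     ltac:(apply dlin0; [apply (D11 _ _ hyin) | apply dE11])
     ltac:(move=> s hs; apply hrect => //; have := Rabs_triang (s - x0) (x0 - a);
            replace (s - x0 + (x0 - a)) with (s - a) by ring; lra).
  have hdy : 0 < Rmin (y0 - tmin) (tmax - y0) by unfold Rmin; destruct Rle_dec; lra.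
  have [_ hY2] := second_min (fun t => w x0 t)
     (fun t => mu2 x0 t - eps * (-2*lam*(t-b)*Ef lam a b x0 t))
     (mu22 x0 y0 - eps * ((4*lam*lam*(y0-b)*(y0-b) - 2*lam)*Ef lam a b x0 y0))
     y0 (Rmin (y0 - tmin) (tmax - y0)) hdy
     ltac:(move=> t ht; unfold w; apply dlin; [apply (ptheta_int tmin tmax) => //; have := Rabs_def2 _ _ ht; have := Rmin_l (y0 - tmin) (tmax - y0); have := Rmin_r (y0 - tmin) (tmax - y0); lra | apply dE2])
     ltac:(apply dlin0; [apply (ptheta_int tmin tmax) => //; lra | apply dE22])
     ltac:(move=> t ht; apply hrect; [lra | have := Rabs_def2 _ _ ht; have := Rmin_l (y0 - tmin) (tmax - y0); have := Rmin_r (y0 - tmin) (tmax - y0); lra]).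
  simpl in hX1.
  have hpde := Hpde x0 y0 ltac:(lra).
  have hQ := HQb x0 ltac:(lra).
  unfold w in hneg.
  set E := Ef lam a b x0 y0 in hX1 hX2 hY2 hneg hE0 *.
  set X := x0 - a in hX1 hX2 hxa hout *. set Y := y0 - b in hY2 hout *.
  have hmuQ : - (r * mu x0 y0 * (1 - nu x0)) <= Q * (eps * E).
    have : - (r * mu x0 y0 * (1 - nu x0)) = mu x0 y0 * (- (r * (1 - nu x0))) by ring.
    move=> ->.
    have : mu x0 y0 * (- (r * (1 - nu x0))) <= mu x0 y0 * Q by apply Rmult_le_compat_l.
    have : mu x0 y0 < eps * E by nra.
    nra.
  have hcx : c * X <= Rabs c * R.
    have := Rle_abs (c * X); rewrite Rabs_mult.
    have : Rabs c * Rabs X <= Rabs c * R by apply Rmult_le_compat_l; [apply Rabs_pos | lra].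
    lra.
  have hsq : kap * (rho * rho) <= y0 * (X * X) + alpha * (Y * Y).
    have : kap * (X*X + Y*Y) <= y0 * (X * X) + alpha * (Y * Y).
      have := Rle_0_sqr X; have := Rle_0_sqr Y; unfold Rsqr; nra.
    have : kap * (rho*rho) <= kap * (X*X + Y*Y) by apply Rmult_le_compat_l; lra.
    lra.
  have hbr : 4*lam*lam*kap*(rho*rho) - 2*lam*K1 - Q <=
     y0 * (4*lam*lam*X*X - 2*lam) + alpha * (4*lam*lam*Y*Y - 2*lam) - 2*lam*(c*X) - Q.
    have : 4*lam*lam*(kap*(rho*rho)) <= 4*lam*lam*(y0 * (X * X) + alpha * (Y * Y)).
      apply Rmult_le_compat_l; nra.
    have : 2*lam*(c*X) <= 2*lam*(Rabs c * R) by apply Rmult_le_compat_l; lra.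
    have : 2*lam*y0 <= 2*lam*tmax by apply Rmult_le_compat_l; lra.
    unfold K1; nra.
  have hfin : 0 < eps * E * (y0 * (4*lam*lam*X*X - 2*lam) + alpha * (4*lam*lam*Y*Y - 2*lam) - 2*lam*(c*X) - Q).
    apply Rmult_lt_0_compat; [nra | lra].
  have : 0 <= y0 * (mu11 x0 y0 - eps * ((4*lam*lam*X*X - 2*lam)*E)) + alpha * (mu22 x0 y0 - eps * ((4*lam*lam*Y*Y - 2*lam)*E)).
    apply Rplus_le_le_0_compat; apply Rmult_le_pos; lra.
  have hm1 : mu1 x0 y0 = eps * (-2*lam*X*E) by lra.
  nra.
move=> x y hy hd.
have hx : Rabs (x - a) <= R.
  have hsq : Rsqr (x - a) < Rsqr R by unfold Rsqr; have := Rle_0_sqr (y - b); unfold Rsqr; lra.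
  have := Rsqr_lt_abs_0 _ _ hsq; rewrite (Rabs_right R); lra.
have := hrect x y hx hy.
have : K < Ef lam a b x y.
  unfold K, Ef; apply exp_increasing; nra.
move=> h1 h2; unfold w in key, h2.
have : 0 < eps * (Ef lam a b x y - K) by apply Rmult_lt_0_compat; lra.
lra.
Qed.

Lemma interior_near tmin tmax y d : tmin < tmax -> tmin <= y <= tmax -> 0 < d ->
  exists y', tmin < y' < tmax /\ Rabs (y' - y) < d.
Proof.
move=> ht hy hd.
set T := tmax - tmin.
set s := Rmin (1/2) (d / (2*T)).
have hs1 : s <= 1/2 by apply Rmin_l.
have hs2 : s <= d / (2*T) by apply Rmin_r.
have hs0 : 0 < s by unfold s, Rmin; destruct Rle_dec; [lra | apply Rdiv_lt_0_compat; unfold T; lra].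
have hs3 : s * T <= d / 2.
  have : s * T <= d / (2*T) * T by apply Rmult_le_compat_r; [unfold T; lra | exact hs2].
  have -> : d / (2*T) * T = d/2 by field; unfold T; lra.
  done.
exists (y + s * ((tmin + tmax)/2 - y)); split.
- unfold T in *; split; nra.
- replace (y + s * ((tmin + tmax) / 2 - y) - y) with (s * ((tmin + tmax) / 2 - y)) by ring.
  apply Rabs_def1; unfold T in *; nra.
Qed.

Theorem propositionA1
  (tmin tmax alpha r c : R)
  (Htmin : 0 < tmin) (Htt : tmin < tmax) (Halpha : 0 < alpha) (Hr : 0 < r)
  (mu mu1 mu2 mu11 mu22 : R -> R -> R) (nu : R -> R)
  (HC2 : C2_strip tmin tmax mu mu1 mu2 mu11 mu22)
  (Hnonneg : forall xi th, tmin < th < tmax -> 0 <= mu xi th)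
  (Hnu : forall xi (pr : Riemann_integrable (mu xi) tmin tmax),
           nu xi = RiemannInt pr)
  (Hpde : forall xi th, tmin < th < tmax ->
     - c * mu1 xi th
       = th * mu11 xi th + alpha * mu22 xi th + r * mu xi th * (1 - nu xi))
  (Hbc : forall xi, mu2 xi tmin = 0 /\ mu2 xi tmax = 0)
  (Hloc : forall b, 0 < b -> exists M, forall xi, - b < xi < b -> Rabs (nu xi) <= M) :
  forall b, 0 < b -> exists C : R,
    forall xi th th', - b < xi < b -> tmin < th < tmax -> tmin < th' < tmax ->
      mu xi th <= C * mu xi th'.
Proof.
move=> b hb.
have C0 : cont_strip tmin tmax mu.
  by destruct HC2 as (f12 & f21 & D1 & D2 & D11 & D12 & D21 & D22 & C0 & _).
have Hnn : forall x y, tmin <= y <= tmax -> 0 <= mu x y.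
  move=> x y hy; apply Rnot_lt_le => hneg.
  have [d [hd H]] := C0 x y hy (- mu x y / 2) ltac:(lra).
  have [y' [hy' hyy]] := interior_near tmin tmax y d Htt hy hd.
  have := H x y' ltac:(unfold in_closed; lra) ltac:(rewrite Rminus_diag Rabs_R0; lra) hyy.
  have := Hnonneg x y' hy'.
  move=> h1 h2; have := Rabs_def2 _ _ h2; lra.
destruct (Classical_Prop.classic (exists x y, -b <= x <= b /\ tmin <= y <= tmax /\ 0 < mu x y)) as [[x1 [y1 [hx1 [hy1 hp]]]] | hno]; last first.
{ exists 0 => xi th th' hxi hth hth'.
  rewrite Rmult_0_l; apply Rnot_lt_le => hpos; apply hno.
  exists xi, th; repeat split; lra. }
have hpos : forall x y, -b <= x <= b -> tmin <= y <= tmax -> 0 < mu x y.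
  have [d [hd H]] := C0 x1 y1 hy1 (mu x1 y1 / 2) ltac:(lra).
  have [yc [hyc hyy]] := interior_near tmin tmax y1 (d/4) Htt hy1 ltac:(lra).
  set rho := d / 2.
  set T := tmax - tmin.
  set R0 := 2*b + T + rho + 1.
  have [M HM] := Hloc (b + R0 + 1) ltac:(unfold R0, T, rho; lra).
  have hM : 0 <= M by have := HM 0 ltac:(unfold R0, T, rho; lra); have := Rabs_pos (nu 0); lra.
  move=> x y hx hy.
  apply (propagate tmin tmax alpha r c mu mu1 mu2 mu11 mu22 nu Htmin Htt Halpha HC2 Hnn Hpde Hbc
           x1 yc rho R0 (r * (1 + M) + 1) (mu x1 y1 / 2)) => //.
  - unfold rho; lra.
  - unfold R0, T, rho; lra.
  - have : 0 <= r * (1 + M) by apply Rmult_le_pos; lra.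
    lra.
  - lra.
  - move=> x' y' hy' hd'.
    have hA : Rabs (x' - x1) <= rho.
      have hsq : Rsqr (x' - x1) <= Rsqr rho by unfold Rsqr; have := Rle_0_sqr (y' - yc); unfold Rsqr; lra.
      have := Rsqr_le_abs_0 _ _ hsq; rewrite (Rabs_right rho); unfold rho; lra.
    have hB : Rabs (y' - yc) <= rho.
      have hsq : Rsqr (y' - yc) <= Rsqr rho by unfold Rsqr; have := Rle_0_sqr (x' - x1); unfold Rsqr; lra.
      have := Rsqr_le_abs_0 _ _ hsq; rewrite (Rabs_right rho); unfold rho; lra.
    have hC : Rabs (y' - y1) < d.
      have := Rabs_triang (y' - yc) (yc - y1).
      replace (y' - yc + (yc - y1)) with (y' - y1) by ring.
      unfold rho in *; lra.
    have := H x' y' hy' ltac:(unfold rho in *; lra) hC.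
    move=> h; have := Rabs_def2 _ _ h; lra.
  - move=> x' hx'.
    have hnu : Rabs (nu x') <= M.
      apply HM; have := Rle_abs (x'-x1); have := Rle_abs (-(x'-x1)); rewrite Rabs_Ropp; lra.
    have hle := Rle_abs (nu x').
    have : r * nu x' <= r * M by apply Rmult_le_compat_l; lra.
    nra.
  - have h1 : (x-x1)*(x-x1) <= (2*b)*(2*b) by nra.
    have h2 : (y-yc)*(y-yc) <= T*T by unfold T; nra.
    have hT : 0 < T by unfold T; lra.
    have hr : 0 < rho by unfold rho; lra.
    unfold R0; nra.
have [xm [ym [hxm [hym hmin]]]] := evt2 mu (-b) b tmin tmax ltac:(lra) ltac:(lra)
  ltac:(move=> x y hx hy e he; have [d [hd H]] := C0 x y hy e he; exists d; split => // x' y' _ hy'; apply H => //).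
have [xM [yM [hxM [hyM hmax]]]] := evt2 (fun x y => - mu x y) (-b) b tmin tmax ltac:(lra) ltac:(lra)
  ltac:(move=> x y hx hy e he; have [d [hd H]] := C0 x y hy e he; exists d; split => // x' y' _ hy' h1 h2;
        replace (- mu x' y' - - mu x y) with (- (mu x' y' - mu x y)) by ring; rewrite Rabs_Ropp; apply H => //).
have hm0 := hpos xm ym hxm hym.
exists (mu xM yM / mu xm ym) => xi th th' hxi hth hth'.
have h1 : mu xi th <= mu xM yM by have := hmax xi th ltac:(lra) ltac:(lra); lra.
have h2 : mu xm ym <= mu xi th' by apply hmin; lra.
have h3 : 0 <= mu xM yM / mu xm ym.
  apply Rle_mult_inv_pos => //; apply Rlt_le, hpos; lra.
have : mu xM yM / mu xm ym * mu xm ym <= mu xM yM / mu xm ym * mu xi th' by apply Rmult_le_compat_l.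
have -> : mu xM yM / mu xm ym * mu xm ym = mu xM yM by field; lra.
lra.
Qed.
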